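(* Let $\lambda>0$, $T\ge 1$, $X>0$, $Y>0$, and let $x_1,\dots,x_T\in\mathbb{R}^d$ with $\|x_t\|_2\le X$ and $y_1,\dots,y_T\in[-Y,Y]$ be arbitrary. Then for $\mathcal{A}\in\{\texttt{r},\texttt{f}\}$, $$R_T^{\mathcal{A}}\le c^{\mathcal{A}}\,(Y^{\mathcal{A}})^2\, d\log\Big(1+\frac{TX^2}{\lambda d}\Big)+\frac{\lambda\,(Y^{\mathcal{A}})^2\,T}{\lambda_{r_T}(G_T(0))},$$ where $c^{\texttt{r}}=4$, $c^{\texttt{f}}=1$, $Y^{\texttt{r}}=\max\{Y,\max_{1\le t\le T}|x_t^\top\theta^{\texttt{r}}_{t-1}|\}$, $Y^{\texttt{f}}=Y$, $r_T=\operatorname{rank}(G_T(0))$ and $\lambda_{r_T}(G_T(0))$ is the smallest positive eigenvalue of $G_T(0)$.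
   Context: Online regression with square loss: at each round $t$ the learner receives $x_t\in\mathbb{R}^d$, predicts $\hat y_t=x_t^\top\theta_{t-1}$, then observes $y_t$ and incurs $\ell_t=(\hat y_t-y_t)^2$. Write $\ell_t(\theta)=(x_t^\top\theta-y_t)^2$, $L_T(\theta)=\sum_{t=1}^T\ell_t(\theta)$, $L_T^{\mathcal{A}}=\sum_{t=1}^T(x_t^\top\theta^{\mathcal{A}}_{t-1}-y_t)^2$, and the regret $R_T^{\mathcal{A}}=L_T^{\mathcal{A}}-\min_{\theta\in\mathbb{R}^d}L_T(\theta)$. Let $G_t(\lambda)=\lambda I+\sum_{q=1}^t x_qx_q^\top$ and $b_t=\sum_{q=1}^t x_qy_q$. Online ridge regression ($\mathcal{A}=\texttt{r}$) uses $\theta^{\texttt{r}}_t=G_t(\lambda)^{-1}b_t$ (so $\theta_0^{\texttt r}=0$). The forward algorithm ($\mathcal{A}=\texttt{f}$) uses $\theta^{\texttt{f}}_{t-1}=G_t(\lambda)^{-1}b_{t-1}$, i.e. $\theta^{\texttt f}_{t-1}\in\arg\min_\theta L_{t-1}(\theta)+(x_t^\top\theta)^2+\lambda\|\theta\|_2^2$. *)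

(* Defs.v *)
From HB Require Import structures.
From mathcomp Require Import all_boot all_order all_algebra.
From mathcomp Require Import all_classical all_reals all_analysis.
Set Implicit Arguments. Unset Strict Implicit. Unset Printing Implicit Defensive.
Import Order.TTheory GRing.Theory Num.Theory.
Local Open Scope ring_scope.

Section OnlineRegression.
Variables (R : realType) (d : nat).

Definition dotv (u v : 'cV[R]_d) : R := (u^T *m v) 0 0.

(* rounds are indexed 1..T; x t, y t are the data of round t *)
Variables (x : nat -> 'cV[R]_d) (y : nat -> R).

Definition Gmx (t : nat) (lam : R) : 'M[R]_d :=
  lam%:M + \sum_(1 <= q < t.+1) (x q *m (x q)^T).

Definition bvec (t : nat) : 'cV[R]_d := \sum_(1 <= q < t.+1) (y q *: x q).

Definition theta_r (lam : R) (t : nat) : 'cV[R]_d := invmx (Gmx t lam) *m bvec t.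

(* forward: theta^f_{t-1} = G_t(lam)^{-1} b_{t-1}; indexed by t here *)
Definition theta_f_prev (lam : R) (t : nat) : 'cV[R]_d :=
  invmx (Gmx t lam) *m bvec t.-1.

Definition pred_r (lam : R) (t : nat) : R := dotv (x t) (theta_r lam t.-1).
Definition pred_f (lam : R) (t : nat) : R := dotv (x t) (theta_f_prev lam t).

Definition loss_t (t : nat) (th : 'cV[R]_d) : R := (dotv (x t) th - y t) ^+ 2.
Definition LT (T : nat) (th : 'cV[R]_d) : R := \sum_(1 <= t < T.+1) loss_t t th.

Definition L_r (lam : R) (T : nat) : R :=
  \sum_(1 <= t < T.+1) (pred_r lam t - y t) ^+ 2.
Definition L_f (lam : R) (T : nat) : R :=
  \sum_(1 <= t < T.+1) (pred_f lam t - y t) ^+ 2.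

(* min_theta L_T(theta) (the infimum is attained: least squares) *)
Definition Lstar (T : nat) : R := inf [set LT T th | th in [set: 'cV[R]_d]].

Definition regret_r (lam : R) (T : nat) : R := L_r lam T - Lstar T.
Definition regret_f (lam : R) (T : nat) : R := L_f lam T - Lstar T.

Definition Yr (lam Y : R) (T : nat) : R :=
  \big[Num.max/Y]_(1 <= t < T.+1) `|pred_r lam t|.

End OnlineRegression.

Definition smallest_pos_eigenvalue (R : realType) (n : nat) (M : 'M[R]_n) (mu : R) :=
  [/\ eigenvalue M mu, 0 < mu &
      forall nu, eigenvalue M nu -> 0 < nu -> mu <= nu].

(* Main.v *)
Require Import Defs.
From HB Require Import structures.
From mathcomp Require Import all_boot all_order all_algebra.
From mathcomp Require Import all_classical all_reals all_analysis.
From mathcomp Require Import complex.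
From mathcomp Require Import ring lra.
Import Order.TTheory GRing.Theory Num.Theory.
Local Open Scope ring_scope.
Set Implicit Arguments. Unset Strict Implicit. Unset Printing Implicit Defensive.

Section S.
Variable R : rcfType.
Local Notation C := (R[i]).
Local Notation toC := (real_complex R).
Local Notation mC := (map_mx toC).
Local Notation ct M := (map_mx Num.conj_op (trmx M)).

Lemma conj_toC (a : R) : Num.conj_op (toC a) = toC a.
Proof. have := conjc_real a. done. Qed.

Lemma ct_mC m n (M : 'M[R]_(m,n)) : ct (mC M) = mC (M^T).
Proof. by apply/matrixP => i j; rewrite !mxE conj_toC. Qed.

Lemma spectral_real n (M : 'M[R]_n) : M^T = M ->
  exists P : 'M[C]_n, exists r : 'I_n -> R,
   [/\ P *m ct P = 1%:M, ct P *m P = 1%:M &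
       mC M = ct P *m diag_mx (\row_i toC (r i)) *m P].
Proof.
move=> Msym.
have Hh : mC M \is hermsymmx.
  apply/is_hermitianmxP; rewrite expr0 scale1r.
  by rewrite ct_mC Msym.
have /orthomx_spectralP := hermitian_normalmx Hh.
have Hr := hermitian_spectral_diag_real Hh.
set P := spectralmx _; set D := spectral_diag _ => HM.
have Pu : P \is unitarymx := spectral_unitarymx _.
have Pinv : invmx P = ct P := invmx_unitary Pu.
exists P, (fun i => complex.Re (D 0 i)); split.
- exact: (unitarymxP Pu).
- by rewrite -Pinv mulVmx // spectral_unit.
rewrite HM Pinv; congr (_ *m diag_mx _ *m _).
apply/rowP => i; rewrite mxE RRe_real //.
by have /mxOverP := Hr; apply.
Qed.

Lemma ct_mul m n p (A : 'M[C]_(m,n)) (B : 'M[C]_(n,p)) : ct (A *m B) = ct B *m ct A.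
Proof. by rewrite trmx_mul map_mxM. Qed.

Lemma quad_entry n (P : 'M[C]_n) (w : 'cV[R]_n) i :
  (P *m mC (w *m w^T) *m ct P) i i =
  (P *m mC w) i 0 * Num.conj_op ((P *m mC w) i 0).
Proof.
have -> : P *m mC (w *m w^T) *m ct P = (P *m mC w) *m ct (P *m mC w).
  by rewrite ct_mul ct_mC map_mxM !mulmxA.
by rewrite mxE big_ord1 !mxE.
Qed.

Lemma diag_formula n (c : R) (s : seq nat) (v : nat -> 'cV[R]_n)
  (P : 'M[C]_n) (r : 'I_n -> R) :
  P *m ct P = 1%:M -> ct P *m P = 1%:M ->
  mC (c%:M + \sum_(q <- s) v q *m (v q)^T) = ct P *m diag_mx (\row_i toC (r i)) *m P ->
  forall i, toC (r i) = toC c +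
     \sum_(q <- s) (P *m mC (v q)) i 0 * Num.conj_op ((P *m mC (v q)) i 0).
Proof.
move=> PP1 PP2 HM i.
have HD : diag_mx (\row_i toC (r i)) =
   P *m mC (c%:M + \sum_(q <- s) v q *m (v q)^T) *m ct P.
  by rewrite HM !mulmxA PP1 mul1mx -mulmxA PP1 mulmx1.
have E : diag_mx (\row_i toC (r i)) i i = toC (r i) by rewrite !mxE eqxx mulr1n.
rewrite -E HD.
rewrite map_mxD raddf_sum /= mulmxDr mulmxDl.
rewrite map_scalar_mx /= mul_mx_scalar -scalemxAl PP1.
rewrite mxE; rewrite [X in X + _]mxE.
rewrite (_ : (1%:M : 'M[C]_n) i i = 1); last by rewrite mxE eqxx.
rewrite mulr1; congr (_ + _).
rewrite mulmx_sumr mulmx_suml summxE; apply: eq_bigr => q _.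
exact: quad_entry.
Qed.

Definition Mform n (c : R) (s : seq nat) (v : nat -> 'cV[R]_n) : 'M[R]_n :=
  c%:M + \sum_(q <- s) v q *m (v q)^T.

Lemma Mform_sym n c s (v : nat -> 'cV[R]_n) : (Mform c s v)^T = Mform c s v.
Proof.
rewrite /Mform linearD /= tr_scalar_mx linear_sum /=; congr (_ + _).
by apply: eq_bigr => q _; rewrite trmx_mul trmxK.
Qed.

Lemma mC_inj m n : injective (@map_mx _ _ toC m n).
Proof. by move=> A B /matrixP H; apply/matrixP => i j; have := H i j; rewrite !mxE => /complexI. Qed.

Lemma mxtrace_mC n (M : 'M[R]_n) : \tr (mC M) = toC (\tr M).
Proof. by rewrite /mxtrace rmorph_sum; apply: eq_bigr => i _; rewrite mxE. Qed.

Lemma sum_seq_ge0_eq0 (F : nat -> C) (s : seq nat) :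
  (forall q, 0 <= F q) -> \sum_(q <- s) F q = 0 -> forall q, q \in s -> F q = 0.
Proof.
move=> F0; elim: s => [|a s IH] //=.
rewrite big_cons => /eqP; rewrite paddr_eq0 ?sumr_ge0 // => /andP[/eqP Fa /eqP Fs] q.
by rewrite inE => /orP[/eqP -> //|]; apply: IH.
Qed.

Lemma spec_det_tr n (c : R) (s : seq nat) (v : nat -> 'cV[R]_n) :
  exists r : 'I_n -> R, [/\ forall i, c <= r i,
     \det (Mform c s v) = \prod_i r i & \tr (Mform c s v) = \sum_i r i].
Proof.
have [P [r [PP1 PP2 HM]]] := spectral_real (Mform_sym c s v).
have Hf := diag_formula PP1 PP2 HM.
exists r; split.
- move=> i; rewrite -lecR (Hf i) lerDl sumr_ge0 // => q _; exact: mul_conjC_ge0.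
- apply: complexI; rewrite -det_map_mx HM !det_mulmx mulrC mulrA -det_mulmx PP1 det1 mul1r.
  by rewrite det_diag rmorph_prod; apply: eq_bigr => i _; rewrite mxE.
- apply: complexI; rewrite -mxtrace_mC HM mxtrace_mulC mulmxA PP1 mul1mx mxtrace_diag.
  by rewrite rmorph_sum; apply: eq_bigr => i _; rewrite mxE.
Qed.

Lemma eig_transfer n (M : 'M[R]_n) (a : R) :
  eigenvalue (mC M) (toC a) -> eigenvalue M a.
Proof. by rewrite !eigenvalue_root_char -map_char_poly fmorph_root. Qed.

Lemma spec_PM n (M : 'M[R]_n) (P : 'M[C]_n) (r : 'I_n -> R) :
  P *m ct P = 1%:M -> mC M = ct P *m diag_mx (\row_i toC (r i)) *m P ->
  P *m mC M = diag_mx (\row_i toC (r i)) *m P.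
Proof. by move=> PP1 ->; rewrite !mulmxA PP1 mul1mx. Qed.

Lemma spec_eig n (M : 'M[R]_n) (P : 'M[C]_n) (r : 'I_n -> R) :
  P *m ct P = 1%:M -> mC M = ct P *m diag_mx (\row_i toC (r i)) *m P ->
  forall i, eigenvalue M (r i).
Proof.
move=> PP1 HM i; apply: eig_transfer; apply/eigenvalueP; exists (row i P).
  rewrite -row_mul (spec_PM PP1 HM) mul_diag_mx; apply/rowP => j.
  by rewrite !mxE.
apply/negP => /eqP H0; have := congr1 (row i) PP1.
rewrite row_mul H0 mul0mx => /rowP /(_ i); rewrite !mxE eqxx /= => /eqP.
by rewrite eq_sym oner_eq0.
Qed.

Lemma Re_mC m n p (A : 'M[R]_(m,n)) (Z : 'M[C]_(n,p)) :
  A *m map_mx (@complex.Re R) Z = map_mx (@complex.Re R) (mC A *m Z).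
Proof.
apply/matrixP => i j; rewrite !mxE.
have ReD : {morph (@complex.Re R) : a b / a + b >-> a + b} by case=> ? ? [] ? ?.
rewrite (big_morph _ ReD (erefl _)); apply: eq_bigr => k _; rewrite !mxE.
by case: (Z k j) => a1 b1 /=; ring.
Qed.


Lemma spec_quad n (M : 'M[R]_n) (P : 'M[C]_n) (r : 'I_n -> R) (w : 'cV[R]_n) :
  ct P *m P = 1%:M -> mC M = ct P *m diag_mx (\row_i toC (r i)) *m P ->
  toC ((w^T *m w) 0 0) = \sum_j Num.conj_op ((P *m mC w) j 0) * (P *m mC w) j 0 /\
  toC ((w^T *m (M *m w)) 0 0) =
     \sum_j Num.conj_op ((P *m mC w) j 0) * toC (r j) * (P *m mC w) j 0.
Proof.
move=> PP2 HM; split.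
  have -> : toC ((w^T *m w) 0 0) = (ct (P *m mC w) *m (P *m mC w)) 0 0.
    rewrite ct_mul mulmxA -(mulmxA _ _ P) PP2 mulmx1 ct_mC -map_mxM [RHS]mxE //.
  by rewrite mxE; apply: eq_bigr => j _; rewrite !mxE.
have -> : toC ((w^T *m (M *m w)) 0 0) =
   (ct (P *m mC w) *m diag_mx (\row_i toC (r i)) *m (P *m mC w)) 0 0.
  rewrite ct_mul ct_mC.
  have -> : mC w^T *m ct P *m diag_mx (\row_i toC (r i)) *m (P *m mC w) =
     mC w^T *m (ct P *m diag_mx (\row_i toC (r i)) *m P) *m mC w by rewrite !mulmxA.
  by rewrite -HM -!map_mxM [RHS]mxE mulmxA.
rewrite mxE; apply: eq_bigr => j _; rewrite mul_mx_diag !mxE.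
congr (_ * _ * _); by rewrite !mxE.
Qed.

Lemma rayleigh n (s : seq nat) (v : nat -> 'cV[R]_n) (mu : R) (z : 'cV[R]_n) :
  (forall nu, eigenvalue (Mform 0 s v) nu -> 0 < nu -> mu <= nu) ->
  mu * (((Mform 0 s v *m z)^T *m (Mform 0 s v *m z)) 0 0) <=
  (((Mform 0 s v *m z)^T *m (Mform 0 s v *m (Mform 0 s v *m z))) 0 0).
Proof.
move=> Hmu; set M := Mform 0 s v; set w := M *m z.
have [P [r [PP1 PP2 HM]]] := spectral_real (Mform_sym 0 s v).
have Hf := diag_formula PP1 PP2 HM.
have r0 i : 0 <= r i.
  by rewrite -lecR (Hf i) rmorph0 add0r sumr_ge0 // => q _; exact: mul_conjC_ge0.
have [H1 H2] := spec_quad w PP2 HM.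
have Hom : P *m mC w = diag_mx (\row_i toC (r i)) *m (P *m mC z).
  by rewrite map_mxM mulmxA (spec_PM PP1 HM) mulmxA.
have tM (a b : R) : toC (a * b) = toC a * toC b by rewrite rmorphM.
rewrite -lecR tM H1 H2 mulr_sumr; apply: ler_sum => j _.
have Hj : (P *m mC w) j 0 = toC (r j) * (P *m mC z) j 0.
  by rewrite Hom mul_diag_mx !mxE.
have [rj0|rjn0] := eqVneq (r j) 0.
  by rewrite Hj rj0 rmorph0 !mul0r rmorph0 !mulr0.
have rjp : 0 < r j by rewrite lt0r rjn0 r0.
have := Hmu _ (spec_eig PP1 HM j) rjp; rewrite -lecR => Hle.
set o := (P *m mC w) j 0.
have -> : Num.conj_op o * toC (r j) * o = toC (r j) * (Num.conj_op o * o) by ring.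
by apply: ler_wpM2r => //; rewrite mulrC; exact: mul_conjC_ge0.

Qed.


Lemma lsq_solution n (s : seq nat) (v : nat -> 'cV[R]_n) (y : nat -> R) :
  exists z : 'cV[R]_n,
    Mform 0 s v *m (Mform 0 s v *m z) = \sum_(q <- s) y q *: v q.
Proof.
set M := Mform 0 s v; set b := \sum_(q <- s) y q *: v q.
have [P [r [PP1 PP2 HM]]] := spectral_real (Mform_sym 0 s v).
have Hf := diag_formula PP1 PP2 HM.
set D := diag_mx (\row_i toC (r i)).
set E := diag_mx (\row_i (toC (r i))^-2).
set zC := ct P *m E *m P *m mC b.
exists (map_mx (@complex.Re R) zC).
rewrite !Re_mC.
have -> : mC M *m (mC M *m zC) = mC b.
  suff HX : P *m (mC M *m (mC M *m zC)) = P *m mC b.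
    by rewrite -[LHS]mul1mx -PP2 -mulmxA HX mulmxA PP2 mul1mx.
  have HPM := spec_PM PP1 HM.
  rewrite !mulmxA HPM -(mulmxA D) HPM mulmxA.
  rewrite -!mulmxA [P *m (ct P *m _)]mulmxA PP1 mul1mx.
  apply/matrixP => i j; rewrite !mul_diag_mx !mxE.
  have [ri0|rin0] := eqVneq (r i) 0.
    rewrite ri0 !mul0r; symmetry.
    have Hs := Hf i; rewrite ri0 in Hs.
    move/eqP: Hs; rewrite addrC -subr_eq subrr eq_sym => /eqP Hs.
    have Hq := sum_seq_ge0_eq0 (fun q => mul_conjC_ge0 _) Hs.
    have -> : \sum_j0 P i j0 * mC b j0 j = (P *m mC b) i j by rewrite mxE.
    have mCb : mC b = \sum_(q <- s) toC (y q) *: mC (v q).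
      apply/matrixP => a c; rewrite summxE !mxE summxE rmorph_sum.
      by apply: eq_bigr => q _; rewrite !mxE rmorphM.
    rewrite mCb mulmx_sumr summxE big_seq big1 // => q qs.
    rewrite -scalemxAr mxE (ord1 j).
    by have /eqP := Hq q qs; rewrite mul_conjC_eq0 => /eqP ->; rewrite mulr0.
  by field; apply/eqP => /(congr1 (@complex.Re R)) /= /eqP; rewrite (negbTE rin0).
by apply/matrixP => i j; rewrite !mxE.
Qed.

Lemma det_rank1 n (u v : 'cV[R]_n) :
  \det (1%:M - u *m v^T) = 1 - (v^T *m u) 0 0.
Proof.
have E1 : block_mx (1%:M : 'M[R]_n) u v^T (1%:M : 'M[R]_1) =
    block_mx 1%:M 0 v^T 1%:M *m block_mx 1%:M u 0 (1%:M - v^T *m u).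
  rewrite mulmx_block ?mul1mx ?mul0mx ?mulmx0 ?mulmx1 ?addr0 ?add0r.
  by rewrite addrC subrK.
have E2 : block_mx (1%:M : 'M[R]_n) u v^T (1%:M : 'M[R]_1) =
    block_mx 1%:M u 0 1%:M *m block_mx (1%:M - u *m v^T) 0 v^T 1%:M.
  rewrite mulmx_block ?mul1mx ?mul0mx ?mulmx0 ?mulmx1 ?addr0 ?add0r.
  by rewrite subrK.
have := congr1 determinant E1; rewrite E2 !det_mulmx.
rewrite det_lblock det_ublock det_ublock det_lblock !det1 !mul1r !mulr1 => ->.
by rewrite det_mx11 !mxE eqxx mulr1n.
Qed.
End S.

Section Dot.
Variables (R : realType) (d : nat).
Implicit Types u v w : 'cV[R]_d.

Lemma dotvE u v : dotv u v = \sum_i u i 0 * v i 0.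
Proof. by rewrite /dotv mxE; apply: eq_bigr => i _; rewrite mxE. Qed.

Lemma dotvC u v : dotv u v = dotv v u.
Proof. by rewrite !dotvE; apply: eq_bigr => i _; rewrite mulrC. Qed.

Lemma dotvDr u v w : dotv u (v + w) = dotv u v + dotv u w.
Proof. by rewrite !dotvE -big_split; apply: eq_bigr => i _; rewrite mxE mulrDr. Qed.

Lemma dotvDl u v w : dotv (v + w) u = dotv v u + dotv w u.
Proof. by rewrite dotvC dotvDr !(dotvC u). Qed.

Lemma dotvZr a u v : dotv u (a *: v) = a * dotv u v.
Proof. by rewrite !dotvE mulr_sumr; apply: eq_bigr => i _; rewrite mxE mulrCA. Qed.

Lemma dotvZl a u v : dotv (a *: u) v = a * dotv u v.
Proof. by rewrite dotvC dotvZr dotvC. Qed.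

Lemma dotvNr u v : dotv u (- v) = - dotv u v.
Proof. by rewrite -scaleN1r dotvZr mulN1r. Qed.

Lemma dotvBr u v w : dotv u (v - w) = dotv u v - dotv u w.
Proof. by rewrite dotvDr dotvNr. Qed.

Lemma dotvBl u v w : dotv (v - w) u = dotv v u - dotv w u.
Proof. by rewrite dotvC dotvBr !(dotvC u). Qed.

Lemma dotv0r u : dotv u 0 = 0.
Proof. by rewrite dotvE big1 // => i _; rewrite mxE mulr0. Qed.

Lemma dotv0l u : dotv 0 u = 0.
Proof. by rewrite dotvC dotv0r. Qed.

Lemma dotv_sumr I (s : seq I) (F : I -> 'cV[R]_d) u :
  dotv u (\sum_(i <- s) F i) = \sum_(i <- s) dotv u (F i).
Proof.
elim: s => [|a s IH]; first by rewrite !big_nil dotv0r.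
by rewrite !big_cons dotvDr IH.
Qed.

Lemma dotv_suml I (s : seq I) (F : I -> 'cV[R]_d) u :
  dotv (\sum_(i <- s) F i) u = \sum_(i <- s) dotv (F i) u.
Proof. by rewrite dotvC dotv_sumr; apply: eq_bigr => i _; rewrite dotvC. Qed.

Lemma dotv_mulmx u (M : 'M[R]_d) v : dotv u (M *m v) = dotv (M^T *m u) v.
Proof. by rewrite /dotv trmx_mul trmxK mulmxA. Qed.

Lemma dotv_ge0 u : 0 <= dotv u u.
Proof. by rewrite dotvE sumr_ge0 // => i _; rewrite -expr2 sqr_ge0. Qed.

Lemma outer_mul u v w : (u *m v^T) *m w = dotv v w *: u.
Proof.
rewrite -mulmxA [v^T *m w]mx11_scalar -/(dotv v w).
by rewrite mul_mx_scalar.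
Qed.

Lemma quad_Gmx (x : nat -> 'cV[R]_d) t c v :
  dotv v (Gmx x t c *m v) = c * dotv v v + \sum_(1 <= q < t.+1) (dotv (x q) v) ^+ 2.
Proof.
rewrite /Gmx mulmxDl mul_scalar_mx dotvDr dotvZr; congr (_ + _).
rewrite mulmx_suml dotv_sumr; apply: eq_bigr => q _.
by rewrite outer_mul dotvZr dotvC expr2.
Qed.

End Dot.

Section Main.
Variables (R : realType) (d : nat) (x : nat -> 'cV[R]_d) (y : nat -> R) (lam : R).
Hypothesis lam_gt0 : 0 < lam.

Local Notation A t := (Gmx x t lam).
Local Notation b t := (bvec x y t).
Local Notation th t := (theta_r x y lam t).

Lemma GmxE t c : Gmx x t c = Mform c (index_iota 1 t.+1) x.
Proof. by []. Qed.

Lemma detA_gt0 t : 0 < \det (A t).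
Proof.
have [r [Hr -> _]] := spec_det_tr lam (index_iota 1 t.+1) x.
by apply: prodr_gt0 => i _; apply: lt_le_trans (Hr i).
Qed.

Lemma A_unit t : A t \in unitmx.
Proof. by rewrite unitmxE unitfE gt_eqF // detA_gt0. Qed.

Lemma A_sym t c : (Gmx x t c)^T = Gmx x t c.
Proof. exact: Mform_sym. Qed.

Lemma Ainv_sym t : (invmx (A t))^T = invmx (A t).
Proof. by rewrite trmx_inv A_sym. Qed.

Lemma A_rec t c : Gmx x t.+1 c = Gmx x t c + x t.+1 *m (x t.+1)^T.
Proof. by rewrite /Gmx big_nat_recr //= addrA. Qed.

Lemma b_rec t : b t.+1 = b t + y t.+1 *: x t.+1.
Proof. by rewrite /bvec big_nat_recr. Qed.

Lemma b0 : b 0 = 0.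
Proof. by rewrite /bvec big_geq. Qed.

Lemma A_th t : A t *m th t = b t.
Proof. by rewrite /theta_r mulmxA mulmxV ?A_unit // mul1mx. Qed.

Lemma dotv_inv t u v : dotv u (invmx (A t) *m v) = dotv (invmx (A t) *m u) v.
Proof. by rewrite dotv_mulmx Ainv_sym. Qed.

Section Step.
Variable t : nat.
Let p := dotv (x t.+1) (th t).
Let g := invmx (A t.+1) *m x t.+1.
Let a := dotv (x t.+1) g.

Lemma Ag : A t.+1 *m g = x t.+1.
Proof. by rewrite /g mulmxA mulmxV ?A_unit // mul1mx. Qed.

Lemma A_th_next : A t.+1 *m th t = b t + p *: x t.+1.
Proof. by rewrite A_rec mulmxDl A_th outer_mul. Qed.

Lemma step_theta : th t.+1 = th t + (y t.+1 - p) *: g.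
Proof.
have -> : th t.+1 = invmx (A t.+1) *m (A t.+1 *m th t + (y t.+1 - p) *: x t.+1).
  by rewrite A_th_next /theta_r b_rec; congr (_ *m _); rewrite scalerBl -addrA subrKC.
by rewrite mulmxDr mulmxA mulVmx ?A_unit // mul1mx -scalemxAr.
Qed.

Lemma step_thetaf : theta_f_prev x y lam t.+1 = th t - p *: g.
Proof.
rewrite /theta_f_prev /=.
have -> : b t = A t.+1 *m th t - p *: x t.+1 by rewrite A_th_next addrK.
by rewrite mulmxBr mulmxA mulVmx ?A_unit // mul1mx -scalemxAr.
Qed.

Lemma a_ge0 : 0 <= a.
Proof.
rewrite /a -Ag dotvC quad_Gmx.
apply: addr_ge0; first by rewrite mulr_ge0 ?dotv_ge0 ?ltW.
by apply: sumr_ge0 => q _; exact: sqr_ge0.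
Qed.

Lemma det_step : \det (A t) = \det (A t.+1) * (1 - a).
Proof.
have -> : A t = A t.+1 *m (1%:M - g *m (x t.+1)^T).
  by rewrite mulmxBr mulmx1 mulmxA Ag A_rec addrK.
by rewrite det_mulmx det_rank1.
Qed.

Lemma a_lt1 : a < 1.
Proof.
have := detA_gt0 t; rewrite det_step pmulr_rgt0 ?detA_gt0 //.
by rewrite subr_gt0.
Qed.

Lemma a_le_ln : a <= ln (\det (A t.+1)) - ln (\det (A t)).
Proof.
rewrite det_step lnM ?posrE ?detA_gt0 ?subr_gt0 ?a_lt1 //.
rewrite opprD addNKr -[1 - a]/(1 + - a) lerNr.
by apply: le_ln1Dx; rewrite ltrN2 a_lt1.
Qed.

Definition mm k := \sum_(1 <= q < k.+1) y q ^+ 2 - dotv (b k) (th k).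

Lemma step_m : mm t.+1 - mm t = (p - y t.+1) ^+ 2 * (1 - a).
Proof.
rewrite /mm big_nat_recr //= b_rec step_theta.
have Hbg : dotv (b t.+1) g = p + (y t.+1 - p) * a.
  rewrite /g dotv_inv -/(theta_r x y lam t.+1) dotvC step_theta dotvDr dotvZr.
  by [].
rewrite -b_rec dotvDr dotvZr Hbg b_rec dotvDl dotvZl -/p.
ring.
Qed.

Lemma pred_r_step : pred_r x y lam t.+1 = p.
Proof. by []. Qed.

Lemma pred_f_step : pred_f x y lam t.+1 = p * (1 - a).
Proof.
rewrite /pred_f step_thetaf dotvBr dotvZr -/p -/a; ring.
Qed.

End Step.

Definition a_ t := dotv (x t.+1) (invmx (A t.+1) *m x t.+1).
Definition p_ t := dotv (x t.+1) (th t).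

Lemma mm0 : mm 0 = 0.
Proof. by rewrite /mm big_geq // b0 dotv0l subr0. Qed.

Lemma Lr_identity T :
  L_r x y lam T = mm T + \sum_(t < T) (p_ t - y t.+1) ^+ 2 * a_ t.
Proof.
elim: T => [|T IH]; first by rewrite /L_r big_geq // mm0 big_ord0 addr0.
rewrite /L_r big_nat_recr //= -/(L_r x y lam T) IH big_ord_recr /=.
have := step_m T; rewrite pred_r_step -/(p_ T) -/(a_ T) => Hm.
have -> : mm T.+1 = mm T + (p_ T - y T.+1) ^+ 2 * (1 - a_ T) by rewrite -Hm; ring.
ring.
Qed.

Lemma Lf_bound T K : (forall t, (t < T)%N -> y t.+1 ^+ 2 <= K) ->
  L_f x y lam T <= mm T + K * \sum_(t < T) a_ t.
Proof.
elim: T => [|T IH] HK; first by rewrite /L_f big_geq // mm0 big_ord0 mulr0 addr0.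
rewrite /L_f big_nat_recr //= -/(L_f x y lam T) big_ord_recr /=.
have := step_m T; rewrite -/(p_ T) -/(a_ T) => Hm.
have -> : mm T.+1 = mm T + (p_ T - y T.+1) ^+ 2 * (1 - a_ T) by rewrite -Hm; ring.
have IH' := IH (fun t tT => HK t (leq_trans tT (leqnSn T))).
rewrite pred_f_step -/(p_ T) -/(a_ T).
have a0 := a_ge0 T; have a1 := a_lt1 T; rewrite -/(a_ T) in a0 a1.
have HKT := HK T (leqnn _).
set P := p_ T; set a := a_ T; set yy := y T.+1.
have key : (P * (1 - a) - yy) ^+ 2 <= (P - yy) ^+ 2 * (1 - a) + K * a.
  have h1 : 0 <= P ^+ 2 * a * (1 - a).
    apply: mulr_ge0; last by rewrite subr_ge0 ltW.
    by apply: mulr_ge0 => //; exact: sqr_ge0.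
  have h2 : yy ^+ 2 * a <= K * a by rewrite ler_wpM2r.
  nra.
rewrite mulrDr; lra.
Qed.

Lemma sum_a T : \sum_(t < T) a_ t <= ln (\det (A T)) - ln (\det (A 0)).
Proof.
elim: T => [|T IH]; first by rewrite big_ord0 subrr.
rewrite big_ord_recr /=; have := a_le_ln T; rewrite -/(a_ T); lra.
Qed.

End Main.

Section Quad.
Variables (R : realType) (d : nat) (x : nat -> 'cV[R]_d) (y : nat -> R) (T : nat).

Lemma F_expand c th :
  LT x y T th + c * dotv th th =
  \sum_(1 <= q < T.+1) y q ^+ 2 - 2 * dotv (bvec x y T) th + dotv th (Gmx x T c *m th).
Proof.
rewrite quad_Gmx /LT /loss_t /bvec dotv_suml mulr_sumr.
have -> : \sum_(1 <= t < T.+1) (dotv (x t) th - y t) ^+ 2 =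
  \sum_(1 <= t < T.+1) (y t ^+ 2 - 2 * dotv (y t *: x t) th + dotv (x t) th ^+ 2).
  by apply: eq_bigr => q _; rewrite dotvZl; ring.
rewrite !big_split /= sumrN; ring.
Qed.

Lemma dotv_sym_G c u v : dotv u (Gmx x T c *m v) = dotv v (Gmx x T c *m u).
Proof. by rewrite dotv_mulmx A_sym dotvC. Qed.

Lemma F_min c w th : 0 <= c -> Gmx x T c *m w = bvec x y T ->
  LT x y T w + c * dotv w w <= LT x y T th + c * dotv th th.
Proof.
move=> c0 Hw; rewrite !F_expand -Hw.
have Hq : 0 <= dotv (th - w) (Gmx x T c *m (th - w)).
  rewrite quad_Gmx addr_ge0 ?mulr_ge0 ?dotv_ge0 //.
  by apply: sumr_ge0 => q _; exact: sqr_ge0.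
move: Hq; rewrite mulmxBr !dotvBr !dotvBl (dotv_sym_G c w th).
rewrite [dotv (Gmx x T c *m w) th]dotvC (dotv_sym_G c th w) [dotv (Gmx x T c *m w) w]dotvC.
lra.
Qed.

Lemma F_at c w : Gmx x T c *m w = bvec x y T ->
  LT x y T w + c * dotv w w = \sum_(1 <= q < T.+1) y q ^+ 2 - dotv (bvec x y T) w.
Proof. by move=> Hw; rewrite F_expand Hw [dotv w _]dotvC; ring. Qed.

End Quad.

Lemma AGM_ord (R : realType) n (r : 'I_n -> R) : (forall i, 0 <= r i) ->
  \prod_i r i <= ((\sum_i r i) / n%:R) ^+ n.
Proof.
move=> r0; have := (@leif_AGM R _ [pred i | true] r (fun i _ => r0 i)).1.
by rewrite cardE size_enum_ord.
Qed.

Lemma trace_Gmx (R : realType) d (x : nat -> 'cV[R]_d) T c :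
  \tr (Gmx x T c) = c *+ d + \sum_(1 <= q < T.+1) dotv (x q) (x q).
Proof.
rewrite /Gmx raddfD /= mxtrace_scalar raddf_sum /=; congr (_ + _).
by apply: eq_bigr => q _; rewrite mxtrace_mulC trace_mx11.
Qed.

Lemma log_bound (R : realType) d (x : nat -> 'cV[R]_d) (lam : R) T (X : R) :
  0 < lam -> 0 < X ->
  (forall t, (1 <= t <= T)%N -> Num.sqrt (dotv (x t) (x t)) <= X) ->
  ln (\det (Gmx x T lam)) - ln (\det (Gmx x 0 lam)) <=
  d%:R * ln (1 + T%:R * X ^+ 2 / (lam * d%:R)).
Proof.
move=> lam0 X0 HX.
have [r [Hr Hdet Htr]] := spec_det_tr lam (index_iota 1 T.+1) x.
have -> : \det (Gmx x 0 lam) = lam ^+ d.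
  by rewrite /Gmx big_geq // addr0 det_scalar.
rewrite -/(Gmx x T lam) in Hdet Htr.
have [d0|dpos] := posnP d.
  subst d; rewrite Hdet big_ord0 expr0 ln1 subrr mul0r //.
have r0 i : 0 < r i by apply: lt_le_trans (Hr i).
set S := \sum_i r i.
have S0 : 0 < S.
  rewrite /S (bigD1 (Ordinal dpos)) //=.
  have := r0 (Ordinal dpos).
  have : 0 <= \sum_(i | i != Ordinal dpos) r i by apply: sumr_ge0 => i _; exact: ltW.
  lra.
have dR0 : 0 < d%:R :> R by rewrite ltr0n.
have HS : S <= lam * d%:R + T%:R * X ^+ 2.
  rewrite /S -Htr trace_Gmx; apply: lerD; first by rewrite mulr_natr.
  have -> : T%:R * X ^+ 2 = \sum_(1 <= q < T.+1) X ^+ 2.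
    by rewrite sumr_const_nat subn1 /= mulr_natl.
  apply: ler_sum_nat => q /andP[q1 qT].
  have := HX q; rewrite q1 -ltnS qT => /(_ isT) Hs.
  have dq := dotv_ge0 (x q).
  have := sqr_sqrtr dq; have := sqrtr_ge0 (dotv (x q) (x q)).
  set s := Num.sqrt _ => h1 h2.  have Hs2 : s <= X := Hs. have h3 : 0 <= X - s by lra. have h4 : 0 <= X + s by lra. have := mulr_ge0 h3 h4. nra.
have Hprod : \prod_i r i <= (S / d%:R) ^+ d := AGM_ord (fun i => ltW (r0 i)).
have Sd0 : 0 < S / d%:R by rewrite divr_gt0.
rewrite Hdet lnXn // -(mulr_natl (ln lam)).
have Hp0 : 0 < \prod_i r i by apply: prodr_gt0 => i _.
have H1 : ln (\prod_i r i) <= d%:R * ln (S / d%:R).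
  rewrite mulr_natl -lnXn // ler_ln ?posrE // exprn_gt0 //.
have H2 : ln (S / d%:R) - ln lam <= ln (1 + T%:R * X ^+ 2 / (lam * d%:R)).
  have -> : S / d%:R = lam * (S / (lam * d%:R)).
    by field; rewrite ?gt_eqF.
  rewrite lnM ?posrE ?divr_gt0 ?mulr_gt0 // addrC addKr.
  rewrite ler_ln ?posrE ?divr_gt0 ?mulr_gt0 //; last first.
    have : 0 <= T%:R * X ^+ 2 / (lam * d%:R).
      by apply: divr_ge0; [apply: mulr_ge0 => //; exact: sqr_ge0 | apply/ltW/mulr_gt0].
    lra.
  rewrite ler_pdivrMr ?mulr_gt0 // mulrDl mul1r divfK ?gt_eqF ?mulr_gt0 //.
have := ler_wpM2l (ltW dR0) H2; rewrite mulrBr; lra.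
Qed.

Lemma bigmax_ge (R : realType) (s : seq nat) (F : nat -> R) (Y : R) :
  Y <= \big[Num.max/Y]_(t <- s) F t /\
  forall t, t \in s -> F t <= \big[Num.max/Y]_(t <- s) F t.
Proof.
elim: s => [|a s [IH1 IH2]]; first by rewrite big_nil.
rewrite big_cons; split.
  by rewrite le_max IH1 orbT.
move=> t; rewrite inE => /orP[/eqP ->|ts]; first by rewrite le_max lexx.
by rewrite le_max IH2 ?orbT.
Qed.

Lemma sum_y2 (R : realType) (y : nat -> R) (Y : R) T :
  (forall t, (1 <= t <= T)%N -> - Y <= y t <= Y) ->
  \sum_(1 <= q < T.+1) y q ^+ 2 <= T%:R * Y ^+ 2.
Proof.
move=> Hy.
have -> : T%:R * Y ^+ 2 = \sum_(1 <= q < T.+1) Y ^+ 2.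
  by rewrite sumr_const_nat subn1 /= mulr_natl.
apply: ler_sum_nat => q /andP[q1 qT].
have := Hy q; rewrite q1 -ltnS qT => /(_ isT) /andP[h1 h2].
nra.
Qed.

Unset Implicit Arguments.

Theorem corollary1 (R : realType) (d : nat) (x : nat -> 'cV[R]_d) (y : nat -> R)
    (lam : R) (T : nat) (X Y : R) (lamr : R) :
  0 < lam -> (1 <= T)%N -> 0 < X -> 0 < Y ->
  (forall t, (1 <= t <= T)%N -> Num.sqrt (dotv (x t) (x t)) <= X) ->
  (forall t, (1 <= t <= T)%N -> - Y <= y t <= Y) ->
  smallest_pos_eigenvalue (Gmx x T 0) lamr ->
  regret_r x y lam T <=
    4 * (Yr x y lam Y T) ^+ 2 * d%:R * ln (1 + T%:R * X ^+ 2 / (lam * d%:R))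
    + lam * (Yr x y lam Y T) ^+ 2 * T%:R / lamr
  /\
  regret_f x y lam T <=
    1 * Y ^+ 2 * d%:R * ln (1 + T%:R * X ^+ 2 / (lam * d%:R))
    + lam * Y ^+ 2 * T%:R / lamr.
Proof.
move=> lam0 T1 X0 Y0 HX Hy [_ lamr0 Heig].
set LOG := d%:R * ln (1 + T%:R * X ^+ 2 / (lam * d%:R)).
have Hsa : \sum_(t < T) a_ x lam t <= LOG.
  apply: le_trans (sum_a x lam0 T) _; exact: log_bound.
have [z Hz] := lsq_solution (index_iota 1 T.+1) x y.
set G := Gmx x T 0.
set u := G *m z.
have Hu : G *m u = bvec x y T by exact: Hz.
have HLT0 th : 0 <= LT x y T th.
  by apply: sumr_ge0 => q _; exact: sqr_ge0.
have HLstar : LT x y T u <= Lstar x y T.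
  apply: lb_le_inf; first by exists (LT x y T u), u.
  move=> _ [th _ <-].
  have := F_min th (lexx 0) Hu; rewrite !mul0r !addr0; done.
have Hmm : mm x y lam T <= LT x y T u + lam * dotv u u.
  have HA := A_th x y lam0 T.
  rewrite /mm -(F_at HA); exact: F_min (ltW lam0) HA.
have Hub : dotv (bvec x y T) u <= T%:R * Y ^+ 2.
  have := F_at (c := 0) Hu; rewrite mul0r addr0 => HF.
  have := HLT0 u; have := sum_y2 Hy; lra.
have Hray : lamr * dotv u u <= dotv u (G *m u).
  have := rayleigh z Heig; done.
have Huu : lam * dotv u u <= lam * Y ^+ 2 * T%:R / lamr.
  rewrite Hu dotvC in Hray.
  have H1 : dotv u u <= T%:R * Y ^+ 2 / lamr.
    by rewrite ler_pdivlMr // mulrC; lra.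
  have := ler_wpM2l (ltW lam0) H1.
  suff -> : lam * Y ^+ 2 * T%:R / lamr = lam * (T%:R * Y ^+ 2 / lamr) by []. by rewrite mulrA mulrA mulrA; ring.
have Ha0 t : 0 <= a_ x lam t := a_ge0 x lam0 t.
have HYr := bigmax_ge (index_iota 1 T.+1) (fun t => `|pred_r x y lam t|) Y.
rewrite -/(Yr x y lam Y T) in HYr; case: HYr => HY1 HY2.
set YR := Yr x y lam Y T in HY1 HY2 *.
have LOG0 : 0 <= LOG.
  apply: le_trans Hsa; apply: sumr_ge0 => t _; exact: Ha0.
split.
- rewrite /regret_r (Lr_identity x y lam0).
  have Hsum : \sum_(t < T) (p_ x y lam t - y t.+1) ^+ 2 * a_ x lam t <=
              4 * YR ^+ 2 * \sum_(t < T) a_ x lam t.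
    rewrite mulr_sumr; apply: ler_sum => t _.
    rewrite ler_wpM2r //.
    have tin : t.+1 \in index_iota 1 T.+1 by rewrite mem_index_iota /= ltnS; exact: ltn_ord.
    have Hp := HY2 _ tin; rewrite /= pred_r_step in Hp.
    have := Hy t.+1; rewrite ltnS ltn_ord /= => /(_ isT) /andP[h1 h2].
    rewrite -/(p_ x y lam t) in Hp.
    set P := p_ x y lam t in Hp *.
    have /andP[h5 h6] : - YR <= P <= YR by rewrite -ler_norml.
    nra.
  have HY2' : Y ^+ 2 <= YR ^+ 2 by nra.
  have : lam * Y ^+ 2 * T%:R / lamr <= lam * YR ^+ 2 * T%:R / lamr.
    rewrite ler_pM2r ?invr_gt0 // ler_pM2r ?ltr0n // ler_pM2l //.
  have : 4 * YR ^+ 2 * \sum_(t < T) a_ x lam t <= 4 * YR ^+ 2 * LOG.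
    by rewrite ler_wpM2l // mulr_ge0 // sqr_ge0.
  rewrite /LOG; nra.
- rewrite /regret_f.
  have Hf := @Lf_bound R d x y lam lam0 T (Y ^+ 2).
  have : L_f x y lam T <= mm x y lam T + Y ^+ 2 * \sum_(t < T) a_ x lam t.
    apply: Hf => t tT; have := Hy t.+1; rewrite ltnS tT /= => /(_ isT) /andP[h1 h2].
    nra.
  have : Y ^+ 2 * \sum_(t < T) a_ x lam t <= Y ^+ 2 * LOG.
    by rewrite ler_wpM2l // sqr_ge0.
  rewrite /LOG; nra.
Qed.
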